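(* For every $M>1$ there exists $c=c(M)>0$ (depending only on $M$, not on $d$ or $T$) such that the following holds. Let $T$ be a directed tree on $[d]$ and let $X=(X_1,\dots,X_d)$ follow the linear structural equation model $X_k=\sum_{j}\beta_{kj}X_j+\eta_k$, where $\beta_{kj}\neq0$ only if $j$ is the parent of $k$ in $T$, and the $\eta_k\sim\mathcal{N}(0,\sigma_k^2)$ are mutually independent. If $|\beta_{kj}|\in[M^{-1},M]$ for every nonzero $\beta_{kj}$ and $\sigma_k^2\in[M^{-1},M]$ for every $k$, then the distribution $P$ of $X$ is $c$-strong tree-faithful to $T$.
   Context: A directed tree on $[d]$ is a directed graph with a root $u$ such that every other node is reached from $u$ by exactly one directed path (so non-root nodes have exactly one parent and there are no v-structures). For $\ell\in([d]\cup\{\emptyset\})\setminus\{j,k\}$, $\rho(X_j,X_k\mid X_\ell)$ denotes the partial correlation given $X_\ell$ (ordinary correlation if $\ell=\emptyset$). $P$ is $c$-strong tree-faithful to a polytree $T$ if (1) for every edge $j-k$ of $T$ and every $\ell\in([d]\cup\{\emptyset\})\setminus\{j,k\}$, $|\rho(X_j,X_k\mid X_\ell)|\ge c$; and (2) for every v-structure $k\to\ell\leftarrow j$ in $T$, $|\rho(X_k,X_j\mid X_\ell)|\ge c$. *)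

(* Defs.v *)
From HB Require Import structures.
From mathcomp Require Import all_boot all_order all_algebra.
From mathcomp Require Import reals.
Set Implicit Arguments. Unset Strict Implicit. Unset Printing Implicit Defensive.
Import Order.TTheory GRing.Theory Num.Theory.
Local Open Scope ring_scope.

(* A directed graph on [d] = 'I_d is given by its edge relation E :
   E j k  means  j -> k. *)

Definition dpath (d : nat) (E : rel 'I_d) (u v : 'I_d) (p : seq 'I_d) : bool :=
  [&& path E u p, uniq (u :: p) & last u p == v].

Definition acyclic (d : nat) (E : rel 'I_d) : Prop :=
  forall (x : 'I_d) (p : seq 'I_d), path E x p -> last x p = x -> p = [::].

Definition directed_tree (d : nat) (E : rel 'I_d) : Prop :=
  acyclic E /\
  exists u : 'I_d, forall v : 'I_d, v != u ->
    exists p : seq 'I_d, dpath E u v p /\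
      forall q : seq 'I_d, dpath E u v q -> q = p.

(* partial correlation rho(X_j, X_k | X_l) computed from the covariance
   matrix S of X; l = None is the empty conditioning set *)
Definition pcorr (R : realType) (d : nat) (S : 'M[R]_d) (j k : 'I_d)
    (l : option 'I_d) : R :=
  match l with
  | None => S j k / Num.sqrt (S j j * S k k)
  | Some l =>
      (S j k - S j l * S k l / S l l) /
      Num.sqrt ((S j j - S j l ^+ 2 / S l l) * (S k k - S k l ^+ 2 / S l l))
  end.

Definition strong_tree_faithful (R : realType) (d : nat) (c : R)
    (S : 'M[R]_d) (E : rel 'I_d) : Prop :=
  (forall j k : 'I_d, (E j k || E k j) ->
     forall l : option 'I_d, l != Some j -> l != Some k ->
       c <= `|pcorr S j k l|) /\
  (forall j k l : 'I_d, E k l -> E j l -> k != j -> ~~ E k j -> ~~ E j k ->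
       c <= `|pcorr S k j (Some l)|).

(* Main.v *)
Require Import Defs.
From HB Require Import structures.
From mathcomp Require Import all_boot all_order all_algebra.
From mathcomp Require Import reals.
From mathcomp Require Import ring lra.
Import Order.TTheory GRing.Theory Num.Theory.
Local Open Scope ring_scope.
Set Implicit Arguments. Unset Strict Implicit. Unset Printing Implicit Defensive.

Section Graph.
Variables (d : nat) (E : rel 'I_d).
Hypothesis acyc : acyclic E.

Lemma conn_antisym a b : connect E a b -> connect E b a -> a = b.
Proof.
move=> /connectP[p1 hp1 ->] /connectP[p2 hp2 hl2].
have := @acyc a (p1 ++ p2); rewrite cat_path hp1 hp2 last_cat -hl2 => /(_ isT erefl).
by case: p1 {hp1 hp2 hl2}.
Qed.

Lemma noloop a : ~~ E a a.
Proof. by apply/negP => h; have := @acyc a [:: a]; rewrite /= h => /(_ isT erefl). Qed.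

Lemma edge_noback j k : E j k -> ~~ connect E k j.
Proof.
move=> hjk; apply/negP => hkj.
have ejk := conn_antisym (connect1 hjk) hkj.
by move: hjk; rewrite ejk (negbTE (noloop k)).
Qed.

Definition mu x := #|[set y | connect E y x]|.

Lemma mu_lt p x : E p x -> (mu p < mu x)%N.
Proof.
move=> hpx; apply: proper_card; rewrite properE; apply/andP; split.
  by apply/subsetP => y; rewrite !inE => hy; apply: connect_trans hy (connect1 hpx).
apply/negP => /subsetP /(_ x); rewrite !inE connect0 => /(_ isT) hxp.
by move: (edge_noback hpx); rewrite hxp.
Qed.

Lemma last_step m x : connect E m x -> x != m -> exists2 q, connect E m q & E q x.
Proof.
move=> /connectP[p hp ->]; elim/last_ind: p hp => [|p y _] /=; first by rewrite eqxx.
rewrite rcons_path last_rcons => /andP[hp he] _.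
by exists (last m p) => //; apply/connectP; exists p.
Qed.

Lemma first_step j x : connect E j x -> x != j -> exists2 c, E j c & connect E c x.
Proof.
move=> /connectP[[|c p] /= hp ->]; first by rewrite eqxx.
move: hp => /andP[hjc hp] _; exists c => //; apply/connectP; by exists p.
Qed.

End Graph.

Section Tree.
Variables (d : nat) (E : rel 'I_d).
Hypothesis tree : directed_tree E.

Lemma path_conn_last (u : 'I_d) p k : path E u p -> k \in u :: p -> connect E k (last u p).
Proof.
elim: p u k => [|y p IH] u k /=.
  by rewrite inE => _ /eqP ->; apply: connect0.
move=> /andP[huy hp]; rewrite inE => /orP[/eqP ->|hk].
  apply: connect_trans (connect1 huy) _; apply: IH => //; exact: mem_head.
exact: IH.
Qed.

Lemma uniq_parent m j k : E m k -> E j k -> m = j.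
Proof.
case: tree => acyc [u hu] hmk hjk.
have reach : forall v, exists p, dpath E u v p.
  move=> v; case: (eqVneq v u) => [->|hv]; first by exists [::]; rewrite /dpath /= eqxx.
  by case: (hu v hv) => p [hp _]; exists p.
have ext : forall v p, E v k -> dpath E u v p -> dpath E u k (rcons p k).
  move=> v p hvk /and3P[hp hun /eqP hl].
  rewrite /dpath rcons_path hp hl hvk last_rcons eqxx /= andbT.
  rewrite -[_ && _]/(uniq (rcons (u :: p) k)) rcons_uniq hun andbT.
  apply/negP => hk; have := path_conn_last hp hk; rewrite hl => hkv.
  by move: (edge_noback acyc hvk); rewrite hkv.
have hku : k != u.
  apply/negP => /eqP hk; subst k.
  case: (reach m) => p /and3P[hp _ /eqP hl].
  have : connect E u m by apply/connectP; exists p.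
  by move=> h; move: (edge_noback acyc hmk); rewrite h.
case: (reach m) => pm hpm; case: (reach j) => pj hpj.
case: (hu k hku) => p [_ huniq].
have e1 := huniq _ (ext _ _ hmk hpm); have e2 := huniq _ (ext _ _ hjk hpj).
move: hpm hpj => /and3P[_ _ /eqP <-] /and3P[_ _ /eqP <-].
have : rcons pm k = rcons pj k by rewrite e1 e2.
by move/rcons_inj => [->].
Qed.

End Tree.

Section Alg.
Variable R : realType.

Lemma sq_div_sqrt (x y : R) : 0 < y -> (x / Num.sqrt y) ^+ 2 = x ^+ 2 / y.
Proof. by move=> hy; rewrite expr_div_n sqr_sqrtr // ltW. Qed.

Lemma le_abs_of_sq (c z : R) : 0 <= c -> c ^+ 2 <= z ^+ 2 -> c <= `|z|.
Proof.
move=> hc h; rewrite -(sqrtr_sqr z) -(ger0_norm hc) -(sqrtr_sqr c).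
by rewrite ler_sqrt // sqr_ge0.
Qed.

Lemma frac_le (x0 m x s : R) : 0 < x0 -> 0 < m -> 0 < x -> 0 < s ->
  x0 * s <= x * m -> x0 / (x0 + m) <= x / (x + s).
Proof.
move=> h0 hm hx hs h.
rewrite ler_pdivrMr ?addr_gt0 // mulrAC ler_pdivlMr ?addr_gt0 //.
nra.
Qed.

Variable M : R.
Hypothesis hM : 1 < M.

Definition x0M := (M ^+ 3 * (1 + M ^+ 2))^-1.
Definition cM := x0M / (x0M + M).

Lemma M_gt0 : 0 < M. Proof. exact: lt_trans ltr01 hM. Qed.
Lemma x0M_gt0 : 0 < x0M.
Proof.
rewrite /x0M invr_gt0; apply: mulr_gt0; first exact: exprn_gt0 M_gt0.
have := sqr_ge0 M; lra.
Qed.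
Lemma cM_gt0 : 0 < cM.
Proof. by rewrite /cM divr_gt0 ?addr_gt0 ?x0M_gt0 ?M_gt0. Qed.
Lemma cM_le1 : cM <= 1.
Proof.
rewrite /cM ler_pdivrMr ?addr_gt0 ?x0M_gt0 ?M_gt0 // mul1r.
have := M_gt0; lra.
Qed.
Lemma cM_sq_le : cM ^+ 2 <= cM.
Proof. have h1 := cM_le1; have h0 := cM_gt0; nra. Qed.

Lemma x0M_le3 : x0M <= (M ^+ 3)^-1.
Proof.
have hM0 := M_gt0.
have h3 : 0 < M ^+ 3 by exact: exprn_gt0.
have h2 : 0 < 1 + M ^+ 2 by have := sqr_ge0 M; lra.
rewrite /x0M -[X in _ <= X]mulr1 invrM ?unitfE ?gt_eqF //.
rewrite mulrC ler_pM2l ?invr_gt0 // invf_le1 //.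
have := sqr_ge0 M; lra.
Qed.


Lemma iM_facts : 0 < M^-1 /\ M ^-1 * M = 1 /\ x0M <= M^-1 ^+ 3.
Proof.
have hM0 := M_gt0; split; first by rewrite invr_gt0.
split; first by rewrite mulVf // gt_eqF.
by rewrite exprVn; apply: x0M_le3.
Qed.

Lemma beta_sq (b : R) : M^-1 <= `|b| -> M^-1 ^+ 2 <= b ^+ 2.
Proof.
move=> h; have hi : 0 <= M^-1 by rewrite invr_ge0 ltW // M_gt0.
rewrite -[b ^+ 2](real_normK (num_real b)) !expr2; exact: ler_pM.
Qed.

Lemma alg_none (b V s : R) : M^-1 <= `|b| -> M^-1 <= V -> M^-1 <= s <= M ->
  cM <= `|(b * V) / Num.sqrt (V * (b ^+ 2 * V + s))|.
Proof.
move=> hb hV /andP[hs1 hs2].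
have [hi [hiM hx]] := iM_facts; have hM0 := M_gt0; have hb2 := beta_sq hb.
have hx0 := x0M_gt0.
have hV0 : 0 < V by exact: lt_le_trans hi hV.
have hs0 : 0 < s by exact: lt_le_trans hi hs1.
have hbV : M^-1 ^+ 3 <= b ^+ 2 * V.
  rewrite exprSr; apply: ler_pM => //; [exact: sqr_ge0|exact: ltW].
have hbV0 : 0 < b ^+ 2 * V by apply: lt_le_trans hbV; exact: exprn_gt0.
apply: le_abs_of_sq; first exact: ltW cM_gt0.
rewrite sq_div_sqrt; last by apply: mulr_gt0 => //; apply: addr_gt0.
have -> : (b * V) ^+ 2 / (V * (b ^+ 2 * V + s)) = b ^+ 2 * V / (b ^+ 2 * V + s).
  field; apply/andP; split; apply: lt0r_neq0 => //; exact: addr_gt0.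
apply: le_trans cM_sq_le _; apply: frac_le => //; nra.
Qed.


Lemma alg_A (b V P L s : R) : M^-1 <= `|b| -> 0 < L ->
  (M * (1 + M ^+ 2))^-1 <= V - P ^+ 2 / L -> M^-1 <= s <= M ->
  cM <= `|(b * V - P * (b * P) / L) /
          Num.sqrt ((V - P ^+ 2 / L) * ((b ^+ 2 * V + s) - (b * P) ^+ 2 / L))|.
Proof.
move=> hb hL hq /andP[hs1 hs2].
have [hi [hiM hx]] := iM_facts; have hM0 := M_gt0; have hb2 := beta_sq hb.
have hx0 := x0M_gt0.
set q := V - P ^+ 2 / L in hq *.
have hq0' : 0 < (M * (1 + M ^+ 2))^-1.
  by rewrite invr_gt0 mulr_gt0 //; have := sqr_ge0 M; lra.
have hq0 : 0 < q by exact: lt_le_trans hq0' hq.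
have hs0 : 0 < s by exact: lt_le_trans hi hs1.
have e1 : b * V - P * (b * P) / L = b * q by rewrite /q; field; exact: lt0r_neq0.
have e2 : (b ^+ 2 * V + s) - (b * P) ^+ 2 / L = b ^+ 2 * q + s.
  by rewrite /q; field; exact: lt0r_neq0.
have ex : x0M = M^-1 ^+ 2 * (M * (1 + M ^+ 2))^-1.
  rewrite /x0M; field; apply/andP; split; last by rewrite gt_eqF.
  by apply: lt0r_neq0; have := sqr_ge0 M; lra.
have hbq : x0M <= b ^+ 2 * q.
  rewrite ex; apply: ler_pM => //; [exact: sqr_ge0 | exact: ltW].
have hbq0 : 0 < b ^+ 2 * q by exact: lt_le_trans hx0 hbq.
rewrite e1 e2.
apply: le_abs_of_sq; first exact: ltW cM_gt0.
rewrite sq_div_sqrt; last by apply: mulr_gt0 => //; apply: addr_gt0.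
have -> : (b * q) ^+ 2 / (q * (b ^+ 2 * q + s)) = b ^+ 2 * q / (b ^+ 2 * q + s).
  field; apply/andP; split; apply: lt0r_neq0 => //; exact: addr_gt0.
apply: le_trans cM_sq_le _; apply: frac_le => //; nra.
Qed.

Lemma alg_B (b V s g N : R) : M^-1 <= `|b| -> M^-1 <= V -> M^-1 <= s <= M ->
  g != 0 -> g ^+ 2 * x0M <= N -> forall K L,
  K = b ^+ 2 * V + s -> L = g ^+ 2 * K + N ->
  cM <= `|(b * V - g * (b * V) * (g * K) / L) /
          Num.sqrt ((V - (g * (b * V)) ^+ 2 / L) * (K - (g * K) ^+ 2 / L))|.
Proof.
move=> hb hV /andP[hs1 hs2] hg hN K L hKd hLd.
have [hi [hiM hx]] := iM_facts; have hM0 := M_gt0; have hb2 := beta_sq hb.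
have hx0 := x0M_gt0.
have hV0 : 0 < V by exact: lt_le_trans hi hV.
have hs0 : 0 < s by exact: lt_le_trans hi hs1.
have hg2 : 0 < g ^+ 2 by rewrite lt0r sqr_ge0 sqrf_eq0 hg.
have hN0 : 0 < N by apply: lt_le_trans hN; exact: mulr_gt0.
have hbV : M^-1 ^+ 3 <= b ^+ 2 * V.
  rewrite exprSr; apply: ler_pM => //; [exact: sqr_ge0|exact: ltW].
have hbV0 : 0 < b ^+ 2 * V by apply: lt_le_trans hbV; exact: exprn_gt0.
have hK : 0 < K by rewrite hKd addr_gt0.
have hL : 0 < L by rewrite hLd addr_gt0 // mulr_gt0.
have e1 : b * V - g * (b * V) * (g * K) / L = b * V * N / L.
  by rewrite hLd; field; rewrite -hLd; exact: lt0r_neq0.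
have e2 : V - (g * (b * V)) ^+ 2 / L = V * (g ^+ 2 * s + N) / L.
  by rewrite hLd hKd; field; rewrite -hKd -hLd; exact: lt0r_neq0.
have e3 : K - (g * K) ^+ 2 / L = K * N / L.
  by rewrite hLd; field; rewrite -hLd; exact: lt0r_neq0.
have hsN : 0 < g ^+ 2 * s + N by rewrite addr_gt0 // mulr_gt0.
rewrite e1 e2 e3.
apply: le_abs_of_sq; first exact: ltW cM_gt0.
rewrite sq_div_sqrt; last by apply: mulr_gt0; apply: mulr_gt0 => //;
  rewrite ?mulr_gt0 ?invr_gt0.
have -> : (b * V * N / L) ^+ 2 / (V * (g ^+ 2 * s + N) / L * (K * N / L)) =
    (b ^+ 2 * V / (b ^+ 2 * V + s)) * (N / (N + g ^+ 2 * s)).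
  rewrite hKd; field.
  by rewrite (lt0r_neq0 hL) (lt0r_neq0 hN0) (lt0r_neq0 hV0) -hKd (lt0r_neq0 hK) addrC (lt0r_neq0 hsN).
rewrite expr2; apply: ler_pM; try exact: ltW cM_gt0.
- apply: frac_le => //; nra.
- apply: frac_le => //; first exact: mulr_gt0; nra.
Qed.


Lemma sq_le_M (b : R) : `|b| <= M -> b ^+ 2 <= M ^+ 2.
Proof.
move=> h; rewrite -[b ^+ 2](real_normK (num_real b)) !expr2.
by apply: ler_pM => //; exact: normr_ge0.
Qed.

Lemma alg_q (x y b v : R) : M^-1 <= x -> M^-1 <= y -> `|b| <= M ->
  (M * (1 + M ^+ 2))^-1 <= x * (1 - b * v) ^+ 2 + y * v ^+ 2.
Proof.
move=> hx hy hb.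
have [hi [hiM _]] := iM_facts; have hM0 := M_gt0.
have hb2 := sq_le_M hb.
set Q := (1 - b * v) ^+ 2 + v ^+ 2.
have hQ0 : 0 <= Q by rewrite addr_ge0 ?sqr_ge0.
have e : (1 + b ^+ 2) * Q = 1 + (b - (1 + b ^+ 2) * v) ^+ 2 by rewrite /Q; ring.
have h1 : 1 <= (1 + b ^+ 2) * Q by rewrite e lerDl sqr_ge0.
have h2 : (1 + b ^+ 2) * Q <= (1 + M ^+ 2) * Q by rewrite ler_wpM2r // lerD2l.
have hM2 : 0 < 1 + M ^+ 2 by have := sqr_ge0 M; lra.
have h3 : (1 + M ^+ 2)^-1 <= Q.
  by rewrite -[_^-1]mul1r ler_pdivrMr // mulrC; apply: le_trans h1 h2.
have A1 : M^-1 * (1 - b * v) ^+ 2 <= x * (1 - b * v) ^+ 2 by rewrite ler_wpM2r ?sqr_ge0.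
have A2 : M^-1 * v ^+ 2 <= y * v ^+ 2 by rewrite ler_wpM2r ?sqr_ge0.
have A3 : M^-1 * (1 + M ^+ 2)^-1 <= M^-1 * Q by rewrite ler_wpM2l // ltW.
rewrite invrM ?unitfE ?gt_eqF // mulrC.
move: A3; rewrite /Q; lra.
Qed.

Lemma alg_N (u b sc : R) : `|b| <= M -> M^-1 <= sc -> (u * b) ^+ 2 * x0M <= sc * u ^+ 2.
Proof.
move=> hb hs.
have [hi [hiM hx]] := iM_facts; have hM0 := M_gt0.
have hb2 := sq_le_M hb.
have h1 : b ^+ 2 * x0M <= M ^+ 2 * M^-1 ^+ 3.
  apply: ler_pM => //; [exact: sqr_ge0 | exact: ltW x0M_gt0].
have e : M ^+ 2 * M^-1 ^+ 3 = M^-1 by field; rewrite gt_eqF.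
rewrite e in h1.
have h2 : b ^+ 2 * x0M <= sc by apply: le_trans h1 hs.
rewrite exprMn -mulrA [sc * _]mulrC; apply: ler_wpM2l; first exact: sqr_ge0.
by [].
Qed.


Lemma q0_le : (M * (1 + M ^+ 2))^-1 <= M^-1.
Proof.
have hM0 := M_gt0; have hM2 : 0 < 1 + M ^+ 2 by have := sqr_ge0 M; lra.
rewrite invrM ?unitfE ?gt_eqF // -[X in _ <= X]mul1r ler_wpM2r ?invr_ge0 ?ltW //.
by rewrite invf_lt1 //; have := sqr_ge0 M; have := M_gt0; nra.
Qed.

End Alg.

Section Mat.
Variables (R : realType) (d : nat) (E : rel 'I_d) (B : 'M[R]_d).
Hypothesis tree : directed_tree E.
Hypothesis hB0 : forall j k : 'I_d, ~~ E j k -> B k j = 0.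

Let acyc : acyclic E := tree.1.

Lemma BE p x : B x p != 0 -> E p x.
Proof. by apply: contraNT => h; rewrite hB0. Qed.

Lemma mu_ind (P : 'I_d -> Prop) :
  (forall x, (forall p, E p x -> P p) -> P x) -> forall x, P x.
Proof.
move=> H x.
have: forall n y, mu E y = n -> P y.
  elim/ltn_ind => n IH y hy; apply: H => p hp; apply: (IH (mu E p)) => //.
  by rewrite -hy; apply: mu_lt.
by move/(_ _ x erefl).
Qed.

Lemma unitIB : (1%:M - B) \in unitmx.
Proof.
rewrite unitmxE unitfE -det_tr; apply/det0P => [[v hv0 hv]].
move: hv; rewrite linearB /= trmx1 mulmxBr mulmx1 => /eqP; rewrite subr_eq0 => /eqP hv.
have key : forall x, v 0 x = 0.
  apply: mu_ind => x IH.
  rewrite hv mxE; apply: big1 => m _; rewrite mxE.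
  have [->|h] := eqVneq (B x m) 0; first by rewrite mulr0.
  by rewrite IH ?mul0r //; apply: BE.
by move/eqP: hv0; apply; apply/matrixP => i j; rewrite ord1 key mxE.
Qed.

Definition A := invmx (1%:M - B).

Lemma A_rec x m : A x m = (x == m)%:R + \sum_p B x p * A p m.
Proof.
have h := mulmxV unitIB; rewrite -/A mulmxBl mul1mx in h.
have eA : A = 1%:M + B *m A by rewrite -h subrK.
by rewrite {1}eA !mxE.
Qed.

Lemma T1 x m : A x m != 0 -> connect E m x.
Proof.
elim/mu_ind: x m => x IH m.
rewrite A_rec; have [->|hxm] := eqVneq x m; first by rewrite connect0.
rewrite add0r => hs.
have [p _ hp] : exists2 p, true & B x p * A p m != 0.
  apply/exists_inP; apply: contraNT hs => /exists_inPn h.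
  by apply/eqP; apply: big1 => p _; apply/eqP; move: (h p isT); rewrite negbK.
have hb : B x p != 0 by apply: contraNneq hp => ->; rewrite mul0r.
have ha : A p m != 0 by apply: contraNneq hp => ->; rewrite mulr0.
exact: connect_trans (IH _ (BE hb) _ ha) (connect1 (BE hb)).
Qed.

Lemma T2 x : A x x = 1.
Proof.
rewrite A_rec eqxx big1 ?addr0 // => p _.
have [->|hb] := eqVneq (B x p) 0; first by rewrite mul0r.
have [->|ha] := eqVneq (A p x) 0; first by rewrite mulr0.
by move: (edge_noback acyc (BE hb)); rewrite (T1 ha).
Qed.

Lemma T3 x m m' : connect E m x -> connect E m' m -> A x m' = A x m * A m m'.
Proof.
elim/mu_ind: x m m' => x IH m m' hmx hm'm.
have [exm|hxm] := eqVneq x m; first by rewrite exm T2 mul1r.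
have hxm' : x != m'.
  apply: contraNneq hxm => exm'.
  by apply/eqP; apply: (conn_antisym acyc _ hmx); rewrite exm'.
have [q hmq hqx] := last_step hmx hxm.
rewrite [A x m']A_rec [A x m]A_rec (negbTE hxm) (negbTE hxm') !add0r big_distrl /=.
apply: eq_bigr => p _.
have [->|hb] := eqVneq (B x p) 0; first by rewrite !mul0r.
have epq : p = q := uniq_parent tree (BE hb) hqx.
by rewrite (IH p (BE hb) m m') ?mulrA // epq.
Qed.


Variable s : 'I_d -> R.
Definition ip (u v : 'I_d -> R) := \sum_m s m * u m * v m.
Definition a x : 'I_d -> R := fun m => A x m.

Lemma ip_sym u v : ip u v = ip v u.
Proof. by apply: eq_bigr => m _; rewrite mulrAC. Qed.

Lemma ip_lin u v1 v2 c w : (forall m, u m = c * v1 m + v2 m) ->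
  ip u w = c * ip v1 w + ip v2 w.
Proof.
move=> H; rewrite /ip big_distrr -big_split; apply: eq_bigr => m _ /=.
rewrite H; ring.
Qed.

Lemma ip_ind k w : ip (fun m => (k == m)%:R) w = s k * w k.
Proof.
rewrite /ip (bigD1 k) //= eqxx big1 ?addr0 ?mulr1 // => m hm.
have -> : (k == m) = false by rewrite eq_sym; exact: negbTE.
by rewrite mulr0 mul0r.
Qed.

Lemma ip_zero u v : (forall m, u m = 0 \/ v m = 0) -> ip u v = 0.
Proof.
move=> H; apply: big1 => m _; case: (H m) => ->; by rewrite ?mulr0 ?mul0r.
Qed.

Hypothesis hs0 : forall k, 0 < s k.

Lemma ip_ge2 u m c : m != c -> s m * u m ^+ 2 + s c * u c ^+ 2 <= ip u u.
Proof.
move=> hmc; rewrite /ip (bigD1 m) //= (bigD1 c) 1?eq_sym //= addrA !expr2 !mulrA.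
rewrite lerDl; apply: sumr_ge0 => i _.
by rewrite -mulrA -expr2; apply: mulr_ge0; [exact: ltW | exact: sqr_ge0].
Qed.

Lemma ip_ge1 u m : s m * u m ^+ 2 <= ip u u.
Proof.
rewrite /ip (bigD1 m) //= !expr2 !mulrA.
rewrite lerDl; apply: sumr_ge0 => i _.
by rewrite -mulrA -expr2; apply: mulr_ge0; [exact: ltW | exact: sqr_ge0].
Qed.

Lemma a_edge j k : E j k -> forall m, a k m = B k j * a j m + (k == m)%:R.
Proof.
move=> hjk m; rewrite /a A_rec addrC; congr (_ + _).
rewrite (bigD1 j) //= big1 ?addr0 // => p hp.
have [->|hb] := eqVneq (B k p) 0; first by rewrite mul0r.
by move: hp; rewrite (uniq_parent tree (BE hb) hjk) eqxx.
Qed.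

Lemma a0 x m : ~~ connect E m x -> a x m = 0.
Proof. by apply: contraNeq => h; exact: T1. Qed.

Lemma aself x : a x x = 1.
Proof. exact: T2. Qed.

Lemma Sigma_ip (Sigma : 'M[R]_d) :
  (1%:M - B) *m Sigma *m (1%:M - B)^T = diag_mx (\row_k s k) ->
  forall x y, Sigma x y = ip (a x) (a y).
Proof.
move=> H x y.
have hl := mulVmx unitIB; rewrite -/A in hl.
have eS : Sigma = A *m ((1%:M - B) *m Sigma *m (1%:M - B)^T) *m A^T.
  by rewrite !mulmxA hl mul1mx -mulmxA -trmx_mul hl trmx1 mulmx1.
rewrite eS H mul_mx_diag !mxE; apply: eq_bigr => m _; rewrite !mxE /a; ring.
Qed.


Variable M : R.
Hypothesis hM : 1 < M.
Hypothesis hBb : forall j k, E j k -> M^-1 <= `|B k j| <= M.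
Hypothesis hsb : forall k, M^-1 <= s k <= M.

Lemma edge_bound (Sigma : 'M[R]_d) j k (l : option 'I_d) :
  (forall x y, Sigma x y = ip (a x) (a y)) -> E j k -> l != Some j -> l != Some k ->
  cM M <= `|pcorr Sigma j k l|.
Proof.
move=> hS hjk hlj hlk.

have hak := a_edge hjk.
have /andP[hb1 hb2] := hBb hjk.
have hajk : a j k = 0.
  apply: a0; exact (edge_noback acyc hjk).
set V := ip (a j) (a j).
have hV : M^-1 <= V.
  apply: le_trans (ip_ge1 _ j); rewrite aself expr1n mulr1.
  by case/andP: (hsb j).
have Sjk : ip (a j) (a k) = B k j * V.
  by rewrite ip_sym (ip_lin _ hak) ip_ind hajk mulr0 addr0.
have Skk : ip (a k) (a k) = B k j ^+ 2 * V + s k.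
  by rewrite (ip_lin _ hak) ip_ind aself Sjk; ring.
case: l hlj hlk => [l|] hlj hlk; last first.
  by rewrite /pcorr !hS Sjk Skk -/V; apply: alg_none.
have hlj' : l != j by apply: contraNneq hlj => ->.
have hlk' : l != k by apply: contraNneq hlk => ->.
set L := ip (a l) (a l).
have hL : 0 < L.
  by apply: lt_le_trans (ip_ge1 _ l); rewrite aself expr1n mulr1.
have [hlk0|hg] := eqVneq (a l k) 0.
- set P := ip (a j) (a l).
  have Skl : ip (a k) (a l) = B k j * P.
    by rewrite (ip_lin _ hak) ip_ind hlk0 mulr0 addr0.
  rewrite /pcorr !hS Sjk Skk Skl -/P -/L -/V.
  apply: alg_A => //.
  set t := P / L.
  set w := fun m => a j m - t * a l m.
  have hw : forall m, w m = - t * a l m + a j m by move=> m; rewrite /w; ring.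
  have e1 : ip (a l) w = - t * L + P.
    by rewrite ip_sym (ip_lin _ hw).
  have e2 : ip (a j) w = - t * P + V.
    by rewrite ip_sym (ip_lin _ hw) [ip (a l) (a j)]ip_sym.
  have ew : V - P ^+ 2 / L = ip w w.
    rewrite (ip_lin _ hw) e1 e2 /t; field; exact: lt0r_neq0.
  rewrite ew.
  have [hlj0|hlj0] := eqVneq (a l j) 0.
    apply: le_trans (ip_ge1 w j); rewrite /w hlj0 aself mulr0 subr0 expr1n mulr1.
    apply: le_trans (q0_le hM) _; by case/andP: (hsb j).
  have hjl : connect E j l := T1 hlj0.
  have [c hjc hcl] := first_step hjl hlj'.
  have hjc' : j != c by apply: contraNneq (noloop acyc j) => {2}->.
  have e3 : a l j = a l c * B c j.
    rewrite /a (T3 hcl (connect1 hjc)); congr (_ * _).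
    have := a_edge hjc j; rewrite /a => ->; rewrite T2 mulr1.
    by rewrite eq_sym (negbTE hjc') addr0.
  have e4 : a j c = 0 by apply: a0; exact (edge_noback acyc hjc).
  apply: le_trans (ip_ge2 w hjc'); rewrite /w e3 e4 aself.
  have -> : 1 - t * (a l c * B c j) = 1 - B c j * (t * a l c) by ring.
  have -> : (0 - t * a l c) ^+ 2 = (t * a l c) ^+ 2 by ring.
  have /andP[hbc1 hbc2] := hBb hjc.
  apply: alg_q => //; [by case/andP: (hsb j) | by case/andP: (hsb c)].
- set g := a l k.
  have hkl : connect E k l := T1 hg.
  set nu := fun m => a l m - g * a k m.
  have hnu : forall m, connect E m k -> nu m = 0.
    by move=> m hmk; rewrite /nu /a /g (T3 hkl hmk) subrr.
  have nk : ip nu (a k) = 0.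
    apply: ip_zero => m; have [->|h] := eqVneq (a k m) 0; first by right.
    by left; apply: hnu; exact: T1.
  have nj : ip nu (a j) = 0.
    apply: ip_zero => m; have [->|h] := eqVneq (a j m) 0; first by right.
    by left; apply: hnu; exact: connect_trans (T1 h) (connect1 hjk).
  have hal : forall m, a l m = g * a k m + nu m by move=> m; rewrite /nu; ring.
  set N := ip nu nu.
  have Skl : ip (a k) (a l) = g * (B k j ^+ 2 * V + s k).
    by rewrite ip_sym (ip_lin _ hal) Skk nk addr0.
  have Sjl : ip (a j) (a l) = g * (B k j * V).
    by rewrite ip_sym (ip_lin _ hal) [ip (a k) (a j)]ip_sym Sjk nj addr0.
  have Sll : L = g ^+ 2 * (B k j ^+ 2 * V + s k) + N.
    rewrite /L (ip_lin _ hal) Skl [ip nu (a l)]ip_sym (ip_lin _ hal) ip_sym nk.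
    rewrite -/N; ring.
  have [c hkc hcl] := first_step hkl hlk'.
  have hkc' : k != c by apply: contraNneq (noloop acyc k) => {2}->.
  have e3 : g = a l c * B c k.
    rewrite /g /a (T3 hcl (connect1 hkc)); congr (_ * _).
    have := a_edge hkc k; rewrite /a => ->; rewrite T2 mulr1.
    by rewrite eq_sym (negbTE hkc') addr0.
  have e4 : a k c = 0 by apply: a0; exact (edge_noback acyc hkc).
  have hN : g ^+ 2 * x0M M <= N.
    apply: le_trans (ip_ge1 nu c); rewrite /nu e4 mulr0 subr0 e3.
    have /andP[_ hbc2] := hBb hkc.
    by apply: alg_N => //; case/andP: (hsb c).
  rewrite /pcorr !hS Sjk Skk Skl Sjl -/L -/V.
  by apply: (alg_B hM hb1 hV (hsb k) hg hN erefl Sll).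
Qed.

End Mat.
Unset Implicit Arguments.

Lemma pcorr_sym (R : realType) d (S : 'M[R]_d) j k l :
  (forall x y, S x y = S y x) -> pcorr S j k l = pcorr S k j l.
Proof.
move=> hS; case: l => [l|] /=; last by rewrite (hS j k) (mulrC (S j j)).
by rewrite (hS k j) (mulrC (S k l)) (mulrC (S k k - _)).
Qed.

Theorem lemma1 (R : realType) (M : R) (hM : 1 < M) :
  exists c : R, 0 < c /\
  forall (d : nat) (E : rel 'I_d) (B Sigma : 'M[R]_d) (sigma2 : 'I_d -> R),
    directed_tree E ->
    (* beta_{kj} = B k j; nonzero exactly on edges j -> k of T, bounded *)
    (forall j k : 'I_d, E j k -> M^-1 <= `|B k j| <= M) ->
    (forall j k : 'I_d, ~~ E j k -> B k j = 0) ->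
    (forall k : 'I_d, M^-1 <= sigma2 k <= M) ->
    (* Sigma is the covariance of X = B X + eta, eta ~ N(0, diag sigma2):
       Cov((I - B) X) = diag sigma2 *)
    (1%:M - B) *m Sigma *m (1%:M - B)^T = diag_mx (\row_k sigma2 k) ->
    strong_tree_faithful c Sigma E.
Proof.
exists (cM M); split; first exact: cM_gt0 hM.
move=> d E B Sigma sigma2 tree hBb hB0 hs H.
have hs0 : forall k, 0 < sigma2 k.
  move=> k; have [hi _] := iM_facts hM.
  by case/andP: (hs k) => h _; exact: lt_le_trans hi h.
have hS := Sigma_ip tree hB0 H.
split.
- move=> j k /orP[hjk|hkj] l hlj hlk.
    exact: (edge_bound tree hB0 hs0 hM hBb hs hS hjk hlj hlk).
  rewrite pcorr_sym; last by move=> x y; rewrite !hS ip_sym.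
  exact: (edge_bound tree hB0 hs0 hM hBb hs hS hkj hlk hlj).
- move=> j k l hkl hjl hkj _ _.
  by move: hkj; rewrite (uniq_parent tree hkl hjl) eqxx.
Qed.
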